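(* Let $\beta\ge 2$ and let $Z_1,Z_2$ be finite sets with $Z_1\cap Z_2=\{u\}$. Let $\alpha_1:Z_1\to T_1$ and $\alpha_2:Z_2\to T_2$ be maps of $Z_1$, $Z_2$ to the leaves of $\beta$-HSTs $T_1,T_2$. Then there exist a $\beta$-HST $T$ and a map $\alpha:Z_1\cup Z_2\to T$ (to leaves of $T$) such that $d_\alpha(x,y)=d_{\alpha_1}(x,y)$ for all $x,y\in Z_1$, $d_\alpha(x,y)=d_{\alpha_2}(x,y)$ for all $x,y\in Z_2$, and $d_\alpha(x,y)\ge\max\{d_{\alpha_1}(x,u),d_{\alpha_2}(u,y)\}$ for all $x\in Z_1$, $y\in Z_2$. (That is, $\beta$-HSTs admit a perfect merge function.)
   Context: A $\beta$-HST is a metric on points mapped to the leaves of a rooted tree whose nodes $v$ carry values $\eta_v$ with $\eta_v=\beta\,\eta_u$ whenever $u$ is a child of $v$ and $\eta_v=1/\beta$ for every leaf $v$; the distance between two points is $\eta_z$ where $z$ is the least common ancestor of their leaves. For a map $\alpha$ into a $\beta$-HST, $d_\alpha(x,y)$ denotes the HST distance between the images of $x$ and $y$. *)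

(* Defs.v *)
From HB Require Import structures.
From mathcomp Require Import all_boot all_order all_algebra.
From mathcomp Require Import reals.
Set Implicit Arguments. Unset Strict Implicit. Unset Printing Implicit Defensive.
Import Order.TTheory GRing.Theory Num.Theory.
Local Open Scope ring_scope.

Record rtree := RTree {
  node : finType;
  root : node;
  parent : node -> node;
  parent_root : parent root = root;
  to_root : forall v : node, exists n, iter n parent v == root }.

Section Tree.
Variable t : rtree.

Definition child (u v : node t) : bool := (u != @root t) && (@parent t u == v).

Definition leaf (v : node t) : bool := [forall u, ~~ child u v].

Definition depth (v : node t) : nat := ex_minn (to_root v).

Definition ancestor (a v : node t) : bool :=
  [exists n : 'I_(depth v).+1, iter n (@parent t) v == a].

Definition lca (a b : node t) : node t :=
  [arg max_(z > @root t | ancestor z a && ancestor z b) depth z]%N.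
End Tree.

Definition is_hst (R : realType) (beta : R) (t : rtree) (eta : node t -> R) : Prop :=
  (forall u v : node t, child u v -> eta v = beta * eta u) /\
  (forall v : node t, leaf v -> eta v = beta^-1).

Definition hst_dist (R : realType) (t : rtree) (eta : node t -> R) (X : Type)
  (alpha : X -> node t) (x y : X) : R :=
  eta (lca (alpha x) (alpha y)).

(* Main.v *)
Require Import Defs.
From HB Require Import structures.
From mathcomp Require Import all_boot all_order all_algebra.
From mathcomp Require Import reals zify.
Import Order.TTheory GRing.Theory Num.Theory.
Local Open Scope ring_scope.

Section TreeLemmas.
Variable t : rtree.
Local Notation p := (@parent t).
Local Notation rt := (Defs.root t).

Lemma iter_root n : iter n p rt = rt.
Proof. by elim: n => //= n ->; exact: parent_root. Qed.

Lemma depthP (v : node t) : iter (depth v) p v = rt.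
Proof. by rewrite /depth; case: ex_minnP => n /eqP. Qed.

Lemma depth_min (v : node t) n : iter n p v = rt -> (depth v <= n)%N.
Proof. by rewrite /depth; case: ex_minnP => m _ H /eqP; exact: H. Qed.

Lemma iter_ge (v : node t) n : (depth v <= n)%N -> iter n p v = rt.
Proof. by move=> h; rewrite -(subnK h) iterD depthP iter_root. Qed.

Lemma iter_lt (v : node t) n : (n < depth v)%N -> iter n p v != rt.
Proof. by move=> h; apply/negP => /eqP /depth_min; rewrite leqNgt h. Qed.

Lemma depth_iter (v : node t) n : (n <= depth v)%N -> depth (iter n p v) = (depth v - n)%N.
Proof.
move=> h; apply/eqP; rewrite eqn_leq; apply/andP; split.
  by apply: depth_min; rewrite -iterD subnK // depthP.
rewrite leq_subLR addnC; apply: depth_min; by rewrite iterD depthP.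
Qed.

Lemma ancP (z v : node t) : reflect (exists2 n, (n <= depth v)%N & iter n p v = z) (ancestor z v).
Proof.
apply: (iffP existsP).
  by case=> n /eqP <-; exists n => //; rewrite -ltnS.
by case=> n hn <-; exists (Ordinal (hn : (n < (depth v).+1)%N)).
Qed.

Lemma Lex (a b : node t) : exists n, iter n p a == iter n p b.
Proof. by exists (maxn (depth a) (depth b)); rewrite !iter_ge ?leq_maxl ?leq_maxr. Qed.

Definition lv (a b : node t) := ex_minn (Lex a b).

Lemma lvP a b : iter (lv a b) p a = iter (lv a b) p b.
Proof. by rewrite /lv; case: ex_minnP => n /eqP. Qed.

Lemma lv_min a b n : iter n p a = iter n p b -> (lv a b <= n)%N.
Proof. by rewrite /lv; case: ex_minnP => m _ H /eqP; exact: H. Qed.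

Lemma lv_mono {a b n} : (lv a b <= n)%N -> iter n p a = iter n p b.
Proof. by move=> h; rewrite -(subnK h) !iterD lvP. Qed.

Lemma lvC a b : lv a b = lv b a.
Proof. by apply/eqP; rewrite eqn_leq !lv_min // lvP. Qed.

Lemma lv0 a : lv a a = 0%N.
Proof. by apply/eqP; rewrite -leqn0 lv_min. Qed.

Lemma lv_ult a b c : (lv a c <= maxn (lv a b) (lv b c))%N.
Proof. by apply: lv_min; rewrite (lv_mono (leq_maxl (lv a b) (lv b c))) (lv_mono (leq_maxr (lv a b) (lv b c))). Qed.

Variables (R : realType) (beta : R) (eta : node t -> R).
Hypothesis hb : 1 < beta.
Hypothesis hh : is_hst beta eta.

Lemma hst_iter {v : node t} {n} : (n <= depth v)%N -> eta (iter n p v) = beta ^+ n * eta v.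
Proof.
elim: n => [|n IH] h; first by rewrite mul1r.
have hc : child (iter n p v) (p (iter n p v)) by rewrite /child iter_lt // eqxx.
by rewrite iterS (proj1 hh _ _ hc) IH ?(ltnW h) // exprS mulrA.
Qed.

Lemma leaf_depth {a b : node t} : leaf a -> leaf b -> depth a = depth b.
Proof.
move=> la lb.
have ea := hst_iter (leqnn (depth a)); have eb := hst_iter (leqnn (depth b)).
rewrite depthP (proj2 hh a la) in ea; rewrite depthP (proj2 hh b lb) ea in eb.
have bi : beta^-1 != 0 by rewrite invr_eq0 gt_eqF // (lt_trans ltr01 hb).
move/(mulIf bi): eb => e.
by apply/eqP; rewrite eqn_leq -!(ler_eXn2l hb) e lexx.
Qed.

Lemma lca_leaf (a b : node t) : leaf a -> leaf b -> lca a b = iter (lv a b) p a.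
Proof.
move=> la lb; have dab := leaf_depth la lb.
have hL : (lv a b <= depth a)%N by apply: lv_min; rewrite iter_ge // iter_ge // dab.
rewrite /lca; case: arg_maxnP.
  by apply/andP; split; apply/ancP; [exists (depth a) | exists (depth b)]; rewrite ?depthP.
move=> z /andP [/ancP [n hn <-] /ancP [m hm em]] hmax.
have hw : ancestor (iter (lv a b) p a) a && ancestor (iter (lv a b) p a) b.
  by apply/andP; split; apply/ancP; [exists (lv a b) | exists (lv a b); rewrite ?lvP // -dab].
have := hmax _ hw; rewrite /= !depth_iter // => h2.
have ed : depth (iter n p a) = depth (iter m p b) by rewrite em.
rewrite !depth_iter // -dab in ed.
rewrite -dab in hm.
have nm : n = m.
  by move: ed hn hm; lia.
subst m.
have h1 : (lv a b <= n)%N by apply: lv_min.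
have h3 : (n <= lv a b)%N.
  by move: h2 hn hL; lia.
suff -> : n = lv a b by [].
by apply/eqP; rewrite eqn_leq h1 h3.
Qed.

Lemma hst_dist_leaf (a b : node t) : leaf a -> leaf b -> eta (lca a b) = beta ^+ (lv a b) * beta^-1.
Proof.
move=> la lb; rewrite lca_leaf // hst_iter ?(proj2 hh) //.
by apply: lv_min; rewrite iter_ge // iter_ge // (leaf_depth la lb).
Qed.
End TreeLemmas.
Arguments lv {t}.
Arguments lvP {t}.
Arguments lv_min {t a b n}.
Arguments lvC {t}.
Arguments lv0 {t}.
Arguments lv_ult {t}.

Section BallTree.
Variables (X : finType) (Z : {set X}) (u : X) (D : X -> X -> nat) (H : nat).
Hypotheses (uZ : u \in Z) (D0 : forall x, x \in Z -> D x x = 0%N)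
  (DC : forall x y, D x y = D y x)
  (Dult : forall x y z, x \in Z -> y \in Z -> z \in Z -> (D x z <= maxn (D x y) (D y z))%N)
  (DH : forall x y, x \in Z -> y \in Z -> (D x y <= H)%N).

Definition ball x k := [set y in Z | (D x y <= k)%N].
Definition valid (q : 'I_H.+1 * {set X}) : bool := [exists x in Z, q.2 == ball x q.1].
Definition NT : finType := {q | valid q}.
Definition cz x := if x \in Z then x else u.
Lemma czZ x : cz x \in Z. Proof. by rewrite /cz; case: ifP. Qed.
Lemma czE {x} : x \in Z -> cz x = x. Proof. by rewrite /cz => ->. Qed.

Lemma mkv x k : valid (inord (minn k H), ball (cz x) (minn k H)).
Proof.
apply/existsP; exists (cz x); rewrite czZ /= inordK ?ltnS ?geq_minr //.
Qed.
Definition mkn x k : NT := exist (fun q => valid q) _ (mkv x k).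
Definition lvl (v : NT) : nat := (val v).1.
Definition rep (v : NT) : X := odflt u [pick x in Z | (val v).2 == ball x (lvl v)].

Lemma lvl_mkn x k : lvl (mkn x k) = minn k H.
Proof. by rewrite /lvl /= inordK // ltnS geq_minr. Qed.

Lemma lvl_le v : (lvl v <= H)%N.
Proof. by rewrite -ltnS /lvl ltn_ord. Qed.

Lemma repP v : rep v \in Z /\ v = mkn (rep v) (lvl v).
Proof.
rewrite /rep; case: pickP => [x /andP [xZ /eqP e] | no] /=.
  split=> //; apply: val_inj => /=.
  rewrite czE // (minn_idPl (lvl_le v)) -e /lvl inord_val.
  exact: surjective_pairing.
case/existsP: (valP v) => x /andP [xZ e].
by move: (no x); rewrite xZ e.
Qed.

Lemma mkn_eq x y k k' : minn k H = minn k' H -> ball (cz x) (minn k H) = ball (cz y) (minn k H) ->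
  mkn x k = mkn y k'.
Proof. by move=> e1 e2; apply: val_inj => /=; rewrite -e1 e2. Qed.

Lemma mkn_ball {x y k k'} : mkn x k = mkn y k' -> ball (cz x) (minn k H) = ball (cz y) (minn k H).
Proof.
move=> e; have e1 := congr1 lvl e; rewrite !lvl_mkn in e1.
by have := congr1 (fun v => (val v).2) e => /=; rewrite e1.
Qed.

Lemma ball_eq {x y m} : x \in Z -> y \in Z -> (D x y <= m)%N -> ball x m = ball y m.
Proof.
move=> xZ yZ h; apply/setP => z; rewrite !inE; case zZ: (z \in Z) => //=.
apply/idP/idP => hz.
  by apply: leq_trans (Dult _ _ _ yZ xZ zZ) _; rewrite geq_max DC h.
by apply: leq_trans (Dult _ _ _ xZ yZ zZ) _; rewrite geq_max h.
Qed.

Lemma ball_inv {x y m} : x \in Z -> y \in Z -> ball x m = ball y m -> (D x y <= m)%N.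
Proof.
move=> xZ yZ e; have : y \in ball y m by rewrite inE yZ D0.
by rewrite -e inE => /andP [].
Qed.

Definition parentT (v : NT) : NT := mkn (rep v) (lvl v).+1.
Definition rootT : NT := mkn u H.

Lemma mkn_root x k : (H <= k)%N -> mkn x k = rootT.
Proof.
move=> h; apply: mkn_eq; first by rewrite (minn_idPr h) minnn.
rewrite (minn_idPr h) (czE uZ); apply: ball_eq; rewrite ?czZ //; exact: DH _ _ (czZ x) uZ.
Qed.

Lemma parent_mkn x k : x \in Z -> parentT (mkn x k) = mkn x k.+1.
Proof.
move=> xZ; rewrite /parentT; case: (repP (mkn x k)) => yZ e.
set y := rep _ in yZ e *.
rewrite lvl_mkn in e *.
have := mkn_ball e; rewrite czE // czE // => eb.
have hxy := ball_inv xZ yZ eb.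
apply: mkn_eq; first by lia.
rewrite !czE //; apply: ball_eq => //; rewrite DC; apply: leq_trans hxy _; lia.
Qed.

Lemma iter_mkn x k n : x \in Z -> iter n parentT (mkn x k) = mkn x (k + n).
Proof.
move=> xZ; elim: n => [|n IH]; first by rewrite addn0.
by rewrite iterS IH parent_mkn // addnS.
Qed.

Lemma prt : parentT rootT = rootT.
Proof. by rewrite /rootT parent_mkn // mkn_root. Qed.

Lemma trt (v : NT) : exists n, iter n parentT v == rootT.
Proof.
case: (repP v) => yZ ->; exists H; rewrite iter_mkn // mkn_root //; lia.
Qed.

Definition T : rtree := @RTree NT rootT parentT prt trt.

Lemma child_lvl (w v : node T) : child w v -> lvl v = (lvl w).+1.
Proof.
rewrite /child /= => /andP [nr /eqP <-].
case: (repP w) nr => yZ e; rewrite e => nr.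
rewrite /parentT.
have hl : (lvl w < H)%N.
  rewrite ltn_neqAle lvl_le andbT; apply/negP => /eqP el.
  by move: nr; rewrite el mkn_root ?eqxx.
rewrite -e lvl_mkn; lia.
Qed.

Lemma leaf_lvl (v : node T) : leaf v -> lvl v = 0%N.
Proof.
move=> /forallP lf; case: (repP v) => yZ e.
case el: (lvl v) => [|k] //.
have hk : (k < H)%N by have := lvl_le v; rewrite el.
have := lf (mkn (rep v) k); rewrite /child /= parent_mkn // -el -e eqxx andbT.
apply: contraNeq => _; apply/negP => /eqP /(congr1 lvl).
by rewrite !lvl_mkn minnn; lia.
Qed.

Lemma leaf_mkn x : leaf (mkn x 0 : node T).
Proof.
apply/forallP => w; apply/negP => /child_lvl; rewrite lvl_mkn; lia.
Qed.

Lemma lv_mkn x y : x \in Z -> y \in Z -> lv (mkn x 0 : node T) (mkn y 0 : node T) = D x y.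
Proof.
move=> xZ yZ; apply/eqP; rewrite eqn_leq; apply/andP; split.
  apply: lv_min => /=; rewrite !iter_mkn // !add0n.
  apply: mkn_eq => //; rewrite !czE // (minn_idPl (DH _ _ xZ yZ)); exact: ball_eq xZ yZ (leqnn _).
have := lvP (mkn x 0 : node T) (mkn y 0); rewrite /= !iter_mkn // !add0n.
move/mkn_ball; rewrite !czE // => /ball_inv -/(_ xZ yZ) h.
by apply: leq_trans h _; apply: geq_minl.
Qed.

Variables (R : realType) (beta : R).

Definition etaT (v : node T) : R := beta ^+ (lvl v) * beta^-1.

Lemma ball_tree : exists (t : rtree) (eta : node t -> R) (alpha : X -> node t),
  [/\ is_hst beta eta, (forall x, leaf (alpha x)) &
      forall x y, x \in Z -> y \in Z -> lv (alpha x) (alpha y) = D x y].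
Proof.
exists T, etaT, (fun x => mkn x 0); split.
- split.
    by move=> w v /child_lvl e; rewrite /etaT e exprS mulrA.
  by move=> v /leaf_lvl e; rewrite /etaT e mul1r.
- by move=> x; apply: leaf_mkn.
- by move=> x y; apply: lv_mkn.
Qed.
End BallTree.

Section Merge.
Variables (X : finType) (Z1 Z2 : {set X}) (u : X)
  (t1 : rtree) (alpha1 : X -> node t1) (t2 : rtree) (alpha2 : X -> node t2).
Hypothesis hI : (Z1 :&: Z2 = [set u])%SET.

Lemma memu {x} : x \in Z1 -> x \in Z2 -> x = u.
Proof. move=> a b; have : x \in Z1 :&: Z2 by rewrite inE a b. by rewrite hI inE => /eqP. Qed.
Lemma u1 : u \in Z1. Proof. have : u \in Z1 :&: Z2 by rewrite hI inE. by rewrite inE => /andP []. Qed.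
Lemma u2 : u \in Z2. Proof. have : u \in Z1 :&: Z2 by rewrite hI inE. by rewrite inE => /andP []. Qed.

Definition l1 x y := lv (alpha1 x) (alpha1 y).
Definition l2 x y := lv (alpha2 x) (alpha2 y).
Definition rr x := if x \in Z1 then l1 x u else l2 x u.
Definition DD x y := if (x \in Z1) && (y \in Z1) then l1 x y
  else if (x \in Z2) && (y \in Z2) then l2 x y else maxn (rr x) (rr y).

Lemma S1 x y : x \in Z1 -> y \in Z1 -> DD x y = l1 x y.
Proof. by rewrite /DD => -> ->. Qed.
Lemma S2 x y : x \in Z2 -> y \in Z2 -> DD x y = l2 x y.
Proof.
move=> x2 y2; rewrite /DD x2 y2 /=; case: ifP => // /andP [a b].
by rewrite (memu a x2) (memu b y2) /l1 /l2 !lv0.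
Qed.
Lemma R1 x : x \in Z1 -> rr x = l1 x u.
Proof. by rewrite /rr => ->. Qed.
Lemma R2 x : x \in Z2 -> rr x = l2 x u.
Proof. by rewrite /rr; case: ifP => // a b; rewrite (memu a b) /l1 /l2 !lv0. Qed.

Lemma E {x y} : x \in Z1 -> y \in Z2 -> DD x y = maxn (rr x) (rr y).
Proof.
move=> a b; case y1 : (y \in Z1).
  by rewrite (memu y1 b) S1 ?u1 // R1 // R1 ?u1 // /l1 lv0 maxn0.
case x2 : (x \in Z2).
  by rewrite (memu a x2) S2 ?u2 // R2 ?u2 // R2 // /l2 lv0 max0n lvC.
by rewrite /DD a y1 x2.
Qed.

Lemma DDC x y : DD x y = DD y x.
Proof.
rewrite /DD /l1 /l2; case: (x \in Z1); case: (y \in Z1); case: (x \in Z2); case: (y \in Z2) => /=;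
  try exact: lvC; exact: maxnC.
Qed.

Lemma E' {x y} : x \in Z2 -> y \in Z1 -> DD x y = maxn (rr x) (rr y).
Proof. by move=> a b; rewrite DDC E // maxnC. Qed.

Lemma K1 {x y} : x \in Z1 -> y \in Z1 ->
  (DD x y <= maxn (rr x) (rr y))%N /\ (rr x <= maxn (DD x y) (rr y))%N.
Proof.
move=> a b; rewrite S1 // !R1 // /l1; split.
  by apply: leq_trans (lv_ult _ (alpha1 u) _) _; rewrite (lvC (alpha1 u)).
exact: lv_ult.
Qed.
Lemma K2 {x y} : x \in Z2 -> y \in Z2 ->
  (DD x y <= maxn (rr x) (rr y))%N /\ (rr x <= maxn (DD x y) (rr y))%N.
Proof.
move=> a b; rewrite S2 // !R2 // /l2; split.
  by apply: leq_trans (lv_ult _ (alpha2 u) _) _; rewrite (lvC (alpha2 u)).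
exact: lv_ult.
Qed.

Lemma DDr {x y} : x \in Z1 :|: Z2 -> y \in Z1 :|: Z2 -> (DD x y <= maxn (rr x) (rr y))%N.
Proof.
rewrite !inE => /orP [a|a] /orP [b|b].
- by case: (K1 a b).
- by rewrite E.
- by rewrite E'.
- by case: (K2 a b).
Qed.

Lemma DDult x y z : x \in Z1 :|: Z2 -> y \in Z1 :|: Z2 -> z \in Z1 :|: Z2 ->
  (DD x z <= maxn (DD x y) (DD y z))%N.
Proof.
rewrite !inE => /orP [a|a] /orP [b|b] /orP [c|c].
- by rewrite !S1 // /l1 lv_ult.
- have := E a c; have := K1 a b; have := E b c; lia.
- have := K1 a c; have := E a b; have := E' b c; lia.
- have := E a c; have := E a b; have := K2 c b; have := DDC z y; lia.
- have := E' a c; have := E' a b; have := K1 c b; have := DDC z y; lia.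
- have := K2 a c; have := E' a b; have := E b c; lia.
- have := E' a c; have := K2 a b; have := E' b c; lia.
- by rewrite !S2 // /l2 lv_ult.
Qed.

Lemma DD0 x : x \in Z1 :|: Z2 -> DD x x = 0%N.
Proof.
rewrite inE => /orP [a|a]; first by rewrite S1 // /l1 lv0.
by rewrite S2 // /l2 lv0.
Qed.
End Merge.
Arguments u1 {X Z1 Z2 u}.
Arguments u2 {X Z1 Z2 u}.
Arguments DD0 {X Z1 Z2 u t1 alpha1 t2 alpha2}.
Arguments DDC {X Z1 Z2 u t1 alpha1 t2 alpha2}.
Arguments DDult {X Z1 Z2 u t1 alpha1 t2 alpha2}.
Arguments DDr {X Z1 Z2 u t1 alpha1 t2 alpha2}.
Arguments S2 {X Z1 Z2 u t1 alpha1 t2 alpha2}.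
Arguments E {X Z1 Z2 u t1 alpha1 t2 alpha2}.
Arguments R2 {X Z1 Z2 u t1 alpha1 t2 alpha2}.
Arguments DD {X Z1 Z2 u t1 alpha1 t2 alpha2}.
Arguments rr {X Z1 u t1 alpha1 t2 alpha2}.
Arguments S1 {X Z1 Z2 u t1 alpha1 t2 alpha2}.
Arguments R1 {X Z1 u t1 alpha1 t2 alpha2}.

Theorem mainTheorem6 (R : realType) (beta : R) (X : finType)
  (Z1 Z2 : {set X}) (u : X)
  (t1 : rtree) (eta1 : node t1 -> R) (alpha1 : X -> node t1)
  (t2 : rtree) (eta2 : node t2 -> R) (alpha2 : X -> node t2) :
  2 <= beta ->
  (Z1 :&: Z2 = [set u])%SET ->
  is_hst beta eta1 -> (forall x, x \in Z1 -> leaf (alpha1 x)) ->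
  is_hst beta eta2 -> (forall x, x \in Z2 -> leaf (alpha2 x)) ->
  exists (t : rtree) (eta : node t -> R) (alpha : X -> node t),
    [/\ is_hst beta eta,
        (forall x, x \in (Z1 :|: Z2)%SET -> leaf (alpha x)),
        (forall x y, x \in Z1 -> y \in Z1 ->
           hst_dist eta alpha x y = hst_dist eta1 alpha1 x y),
        (forall x y, x \in Z2 -> y \in Z2 ->
           hst_dist eta alpha x y = hst_dist eta2 alpha2 x y) &
        (forall x y, x \in Z1 -> y \in Z2 ->
           Num.max (hst_dist eta1 alpha1 x u) (hst_dist eta2 alpha2 u y)
             <= hst_dist eta alpha x y)].
Proof.
move=> hb2 hI h1 lf1 h2 lf2.
have hb : 1 < beta by apply: lt_le_trans hb2; rewrite ltr1n.
have uZ : u \in Z1 :|: Z2 by rewrite inE (u1 hI).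
pose D := @DD X Z1 Z2 u t1 alpha1 t2 alpha2.
pose H := (\max_(x : X) @rr X Z1 u t1 alpha1 t2 alpha2 x)%N.
have DH : forall x y, x \in Z1 :|: Z2 -> y \in Z1 :|: Z2 -> (D x y <= H)%N.
  move=> x y a b; rewrite /D /H; apply: leq_trans (DDr hI _ _ a b) _.
  by rewrite geq_max !leq_bigmax.
have [t [eta [alpha [hh lf hlv]]]] :=
  @ball_tree _ _ _ D H uZ (DD0 hI) DDC (DDult hI) DH R beta.
have bpos : 0 < beta^-1 by rewrite invr_gt0 (lt_trans ltr01 hb).
exists t, eta, alpha; split => //.
- move=> x y a b; rewrite /hst_dist (hst_dist_leaf _ _ _ _ hb hh) ?lf //.
  rewrite (hst_dist_leaf _ _ _ _ hb h1) ?lf1 //.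
  by rewrite hlv ?inE ?a ?b // /D S1.
- move=> x y a b; rewrite /hst_dist (hst_dist_leaf _ _ _ _ hb hh) ?lf //.
  rewrite (hst_dist_leaf _ _ _ _ hb h2) ?lf2 //.
  by rewrite hlv ?inE ?a ?b ?orbT // /D (S2 hI).
- move=> x y a b; rewrite /hst_dist (hst_dist_leaf _ _ _ _ hb hh) ?lf //.
  rewrite (hst_dist_leaf _ _ _ _ hb h1) ?lf1 ?(u1 hI) //.
  rewrite (hst_dist_leaf _ _ _ _ hb h2) ?lf2 ?(u2 hI) //.
  rewrite hlv ?inE ?a ?b ?orbT // /D (E hI _ _ a b) R1 // (R2 hI) // /l1 /l2 (lvC (alpha2 y)).
  by rewrite ge_max !ler_pM2r // !ler_eXn2l // leq_maxl leq_maxr.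
Qed.
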